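(* Let $m\ge2$ be even, $\beta>1$, and let $E_{\mathrm{hsc},m}$ be the $m\times2$ matrix whose $j$-th row is $(\cos(j\pi/m),\sin(j\pi/m))$. Let $E_1,E_2$ be its first and last $m/2$ rows, $v_\beta:=(\beta^{-1},\dots,\beta^{-m/2})$, and let $W$ be the $2\times2$ matrix with rows $v_\beta E_1$ and $v_\beta E_2$. Then $$\sigma_{\min}(W)=\|v_\beta E_1\|_2=\frac{(1+\beta^{-m})^{1/2}}{|\beta-e^{\pi i/m}|}\ \ge\ \beta^{-1},$$ with equality in the last inequality if and only if $m=2$.
   Context: $\sigma_{\min}$ denotes the smallest singular value. *)

(* Defs.v *)
From Stdlib Require Import Reals Lra Lia.
Open Scope R_scope.

Fixpoint rsum (n : nat) (f : nat -> R) : R :=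
  match n with
  | O => 0
  | S p => rsum p f + f p
  end.

Record M2 := mkM2 { e11 : R; e12 : R; e21 : R; e22 : R }.

Definition M2tr (A : M2) : M2 := mkM2 (e11 A) (e21 A) (e12 A) (e22 A).

Definition M2mul (A B : M2) : M2 :=
  mkM2 (e11 A * e11 B + e12 A * e21 B) (e11 A * e12 B + e12 A * e22 B)
       (e21 A * e11 B + e22 A * e21 B) (e21 A * e12 B + e22 A * e22 B).

Definition is_eigenvalue (A : M2) (lam : R) : Prop :=
  exists x1 x2 : R, (x1 <> 0 \/ x2 <> 0) /\
    e11 A * x1 + e12 A * x2 = lam * x1 /\
    e21 A * x1 + e22 A * x2 = lam * x2.

Definition is_singular_value (W : M2) (s : R) : Prop :=
  0 <= s /\ is_eigenvalue (M2mul (M2tr W) W) (s ^ 2).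

Definition is_sigma_min (W : M2) (s : R) : Prop :=
  is_singular_value W s /\ forall t, is_singular_value W t -> s <= t.

Definition norm2 (a b : R) : R := sqrt (a ^ 2 + b ^ 2).

(* |z| for the complex number z = a + b i *)
Definition cmod (a b : R) : R := sqrt (a ^ 2 + b ^ 2).

Definition Ehsc_row1 (m j : nat) : R := cos (INR j * PI / INR m).
Definition Ehsc_row2 (m j : nat) : R := sin (INR j * PI / INR m).

(* v_beta E_1 = sum_{j=1}^{m/2} beta^{-j} * row j ;
   v_beta E_2 = sum_{j=1}^{m/2} beta^{-j} * row (m/2 + j) *)
Definition vE1 (m : nat) (beta : R) : R * R :=
  (rsum (m / 2) (fun i => / beta ^ (i + 1) * Ehsc_row1 m (i + 1)),
   rsum (m / 2) (fun i => / beta ^ (i + 1) * Ehsc_row2 m (i + 1))).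

Definition vE2 (m : nat) (beta : R) : R * R :=
  (rsum (m / 2) (fun i => / beta ^ (i + 1) * Ehsc_row1 m (m / 2 + (i + 1))),
   rsum (m / 2) (fun i => / beta ^ (i + 1) * Ehsc_row2 m (m / 2 + (i + 1)))).

Definition Wmat (m : nat) (beta : R) : M2 :=
  mkM2 (fst (vE1 m beta)) (snd (vE1 m beta)) (fst (vE2 m beta)) (snd (vE2 m beta)).

(* Main.v *)
Require Import Defs.
From Stdlib Require Import Reals Lra Lia.
Open Scope R_scope.

Lemma rsum_ext n f g : (forall i, (i < n)%nat -> f i = g i) -> rsum n f = rsum n g.
Proof.
  induction n; simpl; intros H; [reflexivity|].
  rewrite IHn by (intros; apply H; lia). rewrite H by lia. reflexivity.
Qed.

Lemma rsum_opp n f : rsum n (fun i => - f i) = - rsum n f.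
Proof. induction n; simpl; [ring|rewrite IHn; ring]. Qed.

Lemma geom (beta M : R) (k : nat) : beta <> 0 -> M <> 0 ->
  let th := PI / M in
  let A := rsum k (fun i => / beta ^ (i + 1) * cos (INR (i + 1) * PI / M)) in
  let B := rsum k (fun i => / beta ^ (i + 1) * sin (INR (i + 1) * PI / M)) in
  (1 - cos th / beta) * A + (sin th / beta) * B
    = cos th / beta - / beta ^ (k + 1) * cos (INR (k + 1) * PI / M) /\
  (1 - cos th / beta) * B - (sin th / beta) * A
    = sin th / beta - / beta ^ (k + 1) * sin (INR (k + 1) * PI / M).
Proof.
  intros Hb HM th A B. subst A B. induction k as [|k [IH1 IH2]].
  - simpl. replace (1 * PI / M) with th by (unfold th; field; auto).
    split; field; auto.
  - simpl rsum.
    replace (INR (S k + 1) * PI / M) with (INR (k + 1) * PI / M + th)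
      by (unfold th; rewrite ?plus_INR, ?S_INR; simpl INR; unfold Rdiv; ring).
    rewrite cos_plus, sin_plus.
    replace (beta ^ (S k + 1)) with (beta * beta ^ (k + 1)) by (simpl; reflexivity).
    assert (Hp : beta ^ (k + 1) <> 0) by (apply pow_nonzero; auto).
    set (S1 := rsum k (fun i => / beta ^ (i + 1) * cos (INR (i + 1) * PI / M))) in *.
    set (S2 := rsum k (fun i => / beta ^ (i + 1) * sin (INR (i + 1) * PI / M))) in *.
    set (c1 := cos (INR (k + 1) * PI / M)) in *.
    set (s1 := sin (INR (k + 1) * PI / M)) in *.
    split.
    + transitivity ((1 - cos th / beta) * S1 + sin th / beta * S2 +
        ((1 - cos th / beta) * (/ beta ^ (k + 1) * c1) + sin th / beta * (/ beta ^ (k + 1) * s1))); [ring|].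
      rewrite IH1. field. auto.
    + transitivity ((1 - cos th / beta) * S2 - sin th / beta * S1 +
        ((1 - cos th / beta) * (/ beta ^ (k + 1) * s1) - sin th / beta * (/ beta ^ (k + 1) * c1))); [ring|].
      rewrite IH2. field. auto.
Qed.

Theorem mainTheorem4 (m : nat) (beta : R)
  (Hm : (2 <= m)%nat) (Heven : Nat.Even m) (Hbeta : 1 < beta) :
  let s := norm2 (fst (vE1 m beta)) (snd (vE1 m beta)) in
  let f := sqrt (1 + / beta ^ m) /
           cmod (beta - cos (PI / INR m)) (- sin (PI / INR m)) in
  is_sigma_min (Wmat m beta) s /\
  s = f /\
  / beta <= f /\
  (f = / beta <-> m = 2%nat).
Proof.
  destruct Heven as [n Hn]. subst m.
  assert (Hn1 : (1 <= n)%nat) by lia.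
  assert (Hdiv : (2 * n / 2 = n)%nat) by (rewrite Nat.mul_comm; apply Nat.div_mul; lia).
  assert (Hb0 : beta <> 0) by lra.
  assert (HM : INR (2 * n) <> 0) by (apply not_0_INR; lia).
  assert (HMe : INR (2 * n) = 2 * INR n) by (rewrite mult_INR; simpl; ring).
  assert (HnR : INR n <> 0) by (apply not_0_INR; lia).
  set (th := PI / INR (2 * n)).
  set (A := fst (vE1 (2 * n) beta)). set (B := snd (vE1 (2 * n) beta)).
  assert (HA : A = rsum n (fun i => / beta ^ (i + 1) * cos (INR (i + 1) * PI / INR (2 * n))))
    by (unfold A, vE1; cbn [fst]; rewrite Hdiv; reflexivity).
  assert (HB : B = rsum n (fun i => / beta ^ (i + 1) * sin (INR (i + 1) * PI / INR (2 * n))))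
    by (unfold B, vE1; cbn [snd]; rewrite Hdiv; reflexivity).
  assert (Harg : forall j, INR (n + j) * PI / INR (2 * n) = PI / 2 + INR j * PI / INR (2 * n)).
  { intro j. rewrite plus_INR, HMe. field. auto. }
  assert (HW1 : fst (vE2 (2 * n) beta) = - B).
  { unfold vE2, Ehsc_row1. cbn [fst]. rewrite Hdiv, HB, <- rsum_opp. apply rsum_ext.
    intros i _. rewrite Harg, cos_plus, cos_PI2, sin_PI2. ring. }
  assert (HW2 : snd (vE2 (2 * n) beta) = A).
  { unfold vE2, Ehsc_row2. cbn [snd]. rewrite Hdiv, HA. apply rsum_ext.
    intros i _. rewrite Harg, sin_plus, cos_PI2, sin_PI2. ring. }
  destruct (geom beta (INR (2 * n)) n Hb0 HM) as [G1 G2].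
  fold th in G1, G2. rewrite <- HA, <- HB in G1, G2.
  assert (Hc1 : cos (INR (n + 1) * PI / INR (2 * n)) = - sin th)
    by (rewrite Harg; unfold th; replace (INR 1 * PI / INR (2 * n)) with (PI / INR (2*n)) by (simpl; field; auto);
        rewrite cos_plus, cos_PI2, sin_PI2; ring).
  assert (Hs1 : sin (INR (n + 1) * PI / INR (2 * n)) = cos th)
    by (rewrite Harg; unfold th; replace (INR 1 * PI / INR (2 * n)) with (PI / INR (2*n)) by (simpl; field; auto);
        rewrite sin_plus, cos_PI2, sin_PI2; ring).
  rewrite Hc1, Hs1 in *.
  set (u := / beta ^ n).
  assert (Hu : / beta ^ (n + 1) = / beta * u)
    by (unfold u; rewrite Nat.add_1_r; simpl; field; split; auto; apply pow_nonzero; auto).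
  assert (HX : / beta ^ (2 * n) = u ^ 2)
    by (unfold u; rewrite Nat.mul_comm, pow_mult; field; apply pow_nonzero; auto).
  rewrite Hu in G1, G2.
  set (c := cos th) in *. set (sn := sin th) in *.
  assert (Hcs : sn ^ 2 + c ^ 2 = 1) by (unfold sn, c; rewrite <- (sin2_cos2 th); unfold Rsqr; ring).
  assert (Hth0 : 0 < th) by (unfold th; apply Rdiv_lt_0_compat; [apply PI_RGT_0|apply lt_0_INR; lia]).
  assert (Hcle : c <= 1) by (unfold c; apply COS_bound).
  set (D := (beta - c) ^ 2 + sn ^ 2).
  assert (HD : 0 < D) by (unfold D; nra).
  assert (Hsq : A ^ 2 + B ^ 2 = (1 + u ^ 2) / D).
  { assert (K : ((1 - c / beta) ^ 2 + (sn / beta) ^ 2) * (A ^ 2 + B ^ 2) =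
                (c / beta - / beta * u * - sn) ^ 2 + (sn / beta - / beta * u * c) ^ 2)
      by (rewrite <- G1, <- G2; ring).
    assert (K1 : (1 - c / beta) ^ 2 + (sn / beta) ^ 2 = D / beta ^ 2) by (unfold D; field; auto).
    assert (K2 : (c / beta - / beta * u * - sn) ^ 2 + (sn / beta - / beta * u * c) ^ 2
                 = (sn ^ 2 + c ^ 2) * (1 + u ^ 2) / beta ^ 2) by (field; auto).
    rewrite K1, K2, Hcs in K.
    apply (Rmult_eq_reg_l (D / beta ^ 2)); [rewrite K; field; split; lra|].
    apply Rgt_not_eq. apply Rdiv_lt_0_compat; [lra| apply pow_lt; lra]. }
  assert (Hf : sqrt (1 + / beta ^ (2 * n)) / cmod (beta - c) (- sn) = sqrt ((1 + u ^ 2) / D)).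
  { rewrite HX, sqrt_div; [|nra|auto]. unfold cmod, D. f_equal. f_equal. ring. }
  cbv zeta. rewrite Hf. fold A B. unfold norm2. rewrite Hsq.
  assert (Hu0 : 0 < u) by (unfold u; apply Rinv_0_lt_compat, pow_lt; lra).
  set (f := sqrt ((1 + u ^ 2) / D)).
  assert (Hf0 : 0 < f) by (unfold f; apply sqrt_lt_R0; apply Rdiv_lt_0_compat; nra).
  assert (Hf2 : f ^ 2 = (1 + u ^ 2) / D) by (unfold f; apply pow2_sqrt; apply Rlt_le, Rdiv_lt_0_compat; nra).
  assert (Hib : 0 < / beta) by (apply Rinv_0_lt_compat; lra).
  assert (Hcmp : (n = 1%nat /\ f = / beta) \/ ((n <> 1)%nat /\ / beta < f)).
  { destruct (Nat.eq_dec n 1) as [E|E].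
    - left. split; [exact E|]. subst n.
      assert (Eth : th = PI / 2) by (unfold th; f_equal).
      assert (Ec : c = 0) by (unfold c; rewrite Eth; apply cos_PI2).
      assert (Es : sn = 1) by (unfold sn; rewrite Eth; apply sin_PI2).
      assert (Eu : u = / beta) by (unfold u; simpl; field; auto).
      apply Rsqr_inj; try lra. unfold Rsqr.
      replace (f * f) with (f ^ 2) by ring. rewrite Hf2. unfold D. rewrite Ec, Es, Eu.
      field. split; auto. nra.
    - right. split; [exact E|].
      assert (Hc2 : 1 / 2 < c).
      { assert (Hlt : th < PI / 3).
        { unfold th. rewrite HMe. assert (2 <= INR n) by (replace 2 with (INR 2) by (simpl; ring); apply le_INR; lia).
          pose proof PI_RGT_0. apply (Rmult_lt_reg_r (2 * INR n)); [lra|].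
          field_simplify; try lra. nra. }
        rewrite <- cos_PI3. unfold c. pose proof PI_RGT_0. apply cos_decreasing_1; lra. }
      assert (HDb : D < beta ^ 2) by (unfold D; nra).
      apply Rsqr_incrst_0; try lra. unfold Rsqr.
      replace (f * f) with (f ^ 2) by ring. rewrite Hf2.
      apply Rlt_le_trans with (1 / D).
      + replace (/ beta * / beta) with (1 / beta ^ 2) by (field; auto).
        apply Rmult_lt_compat_l; [lra|]. apply Rinv_lt_contravar; nra.
      + unfold Rdiv. apply Rmult_le_compat_r; [apply Rlt_le, Rinv_0_lt_compat; lra|nra]. }
  split; [|split; [reflexivity|split]].
  - unfold is_sigma_min, is_singular_value, Wmat. rewrite HW1, HW2. fold A B. unfold f. rewrite <- Hsq.
    assert (Hs2 : sqrt (A ^ 2 + B ^ 2) ^ 2 = A ^ 2 + B ^ 2) by (apply pow2_sqrt; nra).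
    split.
    + split; [apply sqrt_pos|]. exists 1, 0. cbn [e11 e12 e21 e22 M2mul M2tr]. rewrite Hs2. split; [left; lra|]. split; ring.
    + intros t [Ht [x1 [x2 [Hx [E1 E2]]]]]. cbn [e11 e12 e21 e22 M2mul M2tr] in E1, E2.
      assert (Et : t ^ 2 = A ^ 2 + B ^ 2).
      { destruct Hx as [Hx|Hx].
        - apply (Rmult_eq_reg_r x1); auto. rewrite <- E1. ring_simplify in E2. nra.
        - apply (Rmult_eq_reg_r x2); auto. rewrite <- E2. nra. }
      rewrite <- Et, sqrt_pow2; lra.
  - destruct Hcmp as [[_ E]|[_ E]]; lra.
  - destruct Hcmp as [[E1 E]|[E1 E]]; split; intro H; try lra.
    + subst n. reflexivity.
    + lia.
Qed.
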